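(* Let $ABC$ be a triangle with incenter $I$, and let $H_A, H_B, H_C$ be the orthocenters of the triangles $BIC$, $CIA$, $AIB$ respectively. Let $O_A, O_B, O_C$ be the circumcenters of the triangles $AH_BH_C$, $BH_CH_A$, $CH_AH_B$ respectively. Then the reflections of the Euler line of triangle $O_AO_BO_C$ in its sidelines $O_BO_C$, $O_CO_A$, $O_AO_B$ are the lines $H_AI$, $H_BI$, $H_CI$ respectively.
   Context: The Euler line of a triangle is the line through its circumcenter, centroid and orthocenter. *)

(* Defs.v *)
From mathcomp Require Import all_boot all_order all_algebra.
Set Implicit Arguments. Unset Strict Implicit. Unset Printing Implicit Defensive.
Import Order.TTheory GRing.Theory Num.Theory.
Local Open Scope ring_scope.

Section Plane.
Variable R : rcfType.

Definition point := (R * R)%type.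

Definition padd (P Q : point) : point := (P.1 + Q.1, P.2 + Q.2).
Definition psub (P Q : point) : point := (P.1 - Q.1, P.2 - Q.2).
Definition pscale (k : R) (P : point) : point := (k * P.1, k * P.2).
Definition dot (P Q : point) : R := P.1 * Q.1 + P.2 * Q.2.
Definition cross (P Q : point) : R := P.1 * Q.2 - P.2 * Q.1.
Definition sqdist (P Q : point) : R := dot (psub P Q) (psub P Q).
Definition dist (P Q : point) : R := Num.sqrt (sqdist P Q).

Definition collinear (P Q X : point) : Prop := cross (psub Q P) (psub X P) = 0.

Definition line (P Q : point) : point -> Prop := fun X => collinear P Q X.

Definition incenter (A B C : point) : point :=
  let a := dist B C in let b := dist C A in let c := dist A B in
  pscale (a + b + c)^-1 (padd (pscale a A) (padd (pscale b B) (pscale c C))).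

Definition centroid (A B C : point) : point :=
  pscale (3%:R)^-1 (padd A (padd B C)).

Definition is_orthocenter (H A B C : point) : Prop :=
  [/\ dot (psub H A) (psub B C) = 0,
      dot (psub H B) (psub C A) = 0 &
      dot (psub H C) (psub A B) = 0].

Definition is_circumcenter (O A B C : point) : Prop :=
  sqdist O A = sqdist O B /\ sqdist O A = sqdist O C.

Definition reflect_pt (P Q X : point) : point :=
  let t := dot (psub X P) (psub Q P) / sqdist Q P in
  let F := padd P (pscale t (psub Q P)) in
  psub (pscale 2%:R F) X.

Definition reflect_set (P Q : point) (L : point -> Prop) : point -> Prop :=
  fun X => exists2 Y, L Y & X = reflect_pt P Q Y.

End Plane.

(* Main.v *)
Require Import Defs.
From mathcomp Require Import all_boot all_order all_algebra.
From mathcomp Require Import ring lra.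
From mathcomp.real_closed Require Import complex.
Import Order.TTheory GRing.Theory Num.Theory.
Local Open Scope ring_scope.

Ltac fld := field; rewrite ?mulf_neq0 ?pnatr_eq0 //; repeat (apply/andP; split); rewrite ?mulf_neq0 ?pnatr_eq0 ?oppr_eq0 //.


Lemma useH (K : nzRingType) (x y : K) : y = 0 -> x = y -> x = 0.
Proof. by move=> -> ->. Qed.

Lemma lin_of (K : nzRingType) (al be ga u v w : K) :
  w = 0 -> w = al*u + be*v - ga -> al*u + be*v = ga.
Proof. by move=> -> /eqP; rewrite eq_sym subr_eq0 => /eqP. Qed.

Lemma uniq2C (K : fieldType) (al be ga al' be' ga' u v u0 v0 : K) :
  al*be' - al'*be != 0 -> al*u + be*v = ga -> al'*u + be'*v = ga' ->
  al*u0 + be*v0 = ga -> al'*u0 + be'*v0 = ga' -> u = u0 /\ v = v0.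
Proof.
move=> nd e1 e2 e3 e4.
have h1 : (al*be' - al'*be)*(u - u0) = be'*((al*u+be*v) - (al*u0+be*v0))
   - be*((al'*u + be'*v) - (al'*u0+be'*v0)) by ring.
have h2 : (al*be' - al'*be)*(v - v0) = al*((al'*u + be'*v) - (al'*u0+be'*v0))
   - al'*((al*u+be*v) - (al*u0+be*v0)) by ring.
rewrite e1 e2 e3 e4 !subrr !mulr0 subrr in h1 h2.
move/eqP: h1; rewrite mulf_eq0 (negbTE nd) /= subr_eq0 => /eqP ->.
move/eqP: h2; rewrite mulf_eq0 (negbTE nd) /= subr_eq0 => /eqP ->.
by [].
Qed.

Lemma circC (K : fieldType) (a ad p pd q qd o od o0 o0d : K) :
  (pd - ad)*(q - a) - (qd - ad)*(p - a) != 0 ->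
  (o - a)*(od - ad) = (o - p)*(od - pd) -> (o - a)*(od - ad) = (o - q)*(od - qd) ->
  (o0 - a)*(o0d - ad) = (o0 - p)*(o0d - pd) -> (o0 - a)*(o0d - ad) = (o0 - q)*(o0d - qd) ->
  o = o0 /\ od = o0d.
Proof.
move=> nd e1 e2 e3 e4.
apply: (@uniq2C K _ _ (p*pd - a*ad) _ _ (q*qd - a*ad) _ _ _ _ nd).
- apply: (@lin_of K _ _ _ _ _ ((o - a)*(od - ad) - (o - p)*(od - pd))); first by rewrite e1 subrr.
  ring.
- apply: (@lin_of K _ _ _ _ _ ((o - a)*(od - ad) - (o - q)*(od - qd))); first by rewrite e2 subrr.
  ring.
- apply: (@lin_of K _ _ _ _ _ ((o0 - a)*(o0d - ad) - (o0 - p)*(o0d - pd))); first by rewrite e3 subrr.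
  ring.
- apply: (@lin_of K _ _ _ _ _ ((o0 - a)*(o0d - ad) - (o0 - q)*(o0d - qd))); first by rewrite e4 subrr.
  ring.
Qed.

Lemma uniq2R (K : fieldType) (al be ga al' be' ga' u v u0 v0 : K) :
  al*be' - al'*be != 0 -> u*al + v*be = ga -> u*al' + v*be' = ga' ->
  u0*al + v0*be = ga -> u0*al' + v0*be' = ga' -> u = u0 /\ v = v0.
Proof. by move=> nd; rewrite ![u*_]mulrC ![v*_]mulrC ![u0*_]mulrC ![v0*_]mulrC; apply: uniq2C. Qed.
Arguments uniq2R {K al be ga al' be' ga' u v u0 v0}.
Arguments uniq2C {K al be ga al' be' ga' u v u0 v0}.
Arguments circC {K a ad p pd q qd o od o0 o0d}.

Lemma lin2 (K : nzRingType) (u v al be ga w : K) :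
  w = 0 -> w = u*al + v*be - ga -> u*al + v*be = ga.
Proof. by move=> -> /eqP; rewrite eq_sym subr_eq0 => /eqP. Qed.
Arguments lin2 {K u v al be ga w}.
Arguments useH {K x y}.


Lemma inv_of (K : fieldType) (x xd : K) : x * xd = 1 -> x != 0 /\ xd = x^-1.
Proof.
move=> h; have nx : x != 0 by apply/eqP=> x0; move: h; rewrite x0 mul0r => /eqP; rewrite eq_sym oner_eq0.
by split=> //; apply: (mulfI nx); rewrite h mulfV.
Qed.

Lemma nz_split (K : fieldType) (x y : K) : x * y != 0 -> x != 0 /\ y != 0.
Proof. by rewrite mulf_eq0 negb_or => /andP[]. Qed.

Lemma core (K : numFieldType) (X Y Z Xd Yd Zd r a ad b bd c cd ha had hb hbd hc hcd
   oa oad ob obd oc ocd o od : K) :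
  X * Xd = 1 -> Y * Yd = 1 -> Z * Zd = 1 -> r != 0 ->
  b*Xd + bd*X = 2*r -> c*Xd + cd*X = 2*r -> c*Yd + cd*Y = 2*r ->
  a*Yd + ad*Y = 2*r -> a*Zd + ad*Z = 2*r -> b*Zd + bd*Z = 2*r ->
  Yd*Z - Zd*Y != 0 -> Zd*X - Xd*Z != 0 -> Xd*Y - Yd*X != 0 ->
  (ha - b)*(-cd) + (had - bd)*(-c) = 0 -> ha*(cd - bd) + had*(c - b) = 0 ->
  (hb - c)*(-ad) + (hbd - cd)*(-a) = 0 -> hb*(ad - cd) + hbd*(a - c) = 0 ->
  (hc - a)*(-bd) + (hcd - ad)*(-b) = 0 -> hc*(bd - ad) + hcd*(b - a) = 0 ->
  (oa - a)*(oad - ad) = (oa - hb)*(oad - hbd) -> (oa - a)*(oad - ad) = (oa - hc)*(oad - hcd) ->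
  (hbd - ad)*(hc - a) - (hcd - ad)*(hb - a) != 0 ->
  (ob - b)*(obd - bd) = (ob - hc)*(obd - hcd) -> (ob - b)*(obd - bd) = (ob - ha)*(obd - had) ->
  (hcd - bd)*(ha - b) - (had - bd)*(hc - b) != 0 ->
  (oc - c)*(ocd - cd) = (oc - ha)*(ocd - had) -> (oc - c)*(ocd - cd) = (oc - hb)*(ocd - hbd) ->
  (had - cd)*(hb - c) - (hbd - cd)*(ha - c) != 0 ->
  (o - oa)*(od - oad) = (o - ob)*(od - obd) -> (o - oa)*(od - oad) = (o - oc)*(od - ocd) ->
  (obd - oad)*(oc - oa) - (ocd - oad)*(ob - oa) != 0 ->
  [/\ ha != 0,
   ha * (obd + (ocd - obd)/(oc - ob) * (o - ob))
     - had * (ob + (oc - ob)/(ocd - obd) * (od - obd)) = 0 &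
   ha * (obd + (ocd - obd)/(oc - ob) * ((oa+ob+oc)/3 - ob))
     - had * (ob + (oc - ob)/(ocd - obd) * ((oad+obd+ocd)/3 - obd)) = 0].
Proof.
move=> /inv_of[nX eXd] /inv_of[nY eYd] /inv_of[nZ eZd] nr.
subst Xd Yd Zd.
move=> tBX tCX tCY tAY tAZ tBZ dYZ dZX dXY oA1 oA2 oB1 oB2 oC1 oC2.
have {}oA1 : ha*(-cd) + had*(-c) = b*(-cd) + bd*(-c) by apply: (lin2 oA1); ring.
have {}oA2 : ha*(cd - bd) + had*(c - b) = 0 by apply: (lin2 oA2); ring.
have {}oB1 : hb*(-ad) + hbd*(-a) = c*(-ad) + cd*(-a) by apply: (lin2 oB1); ring.
have {}oB2 : hb*(ad - cd) + hbd*(a - c) = 0 by apply: (lin2 oB2); ring.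
have {}oC1 : hc*(-bd) + hcd*(-b) = a*(-bd) + ad*(-b) by apply: (lin2 oC1); ring.
have {}oC2 : hc*(bd - ad) + hcd*(b - a) = 0 by apply: (lin2 oC2); ring.
move=> cA1 cA2 nA cB1 cB2 nB cC1 cC2 nC cO1 cO2 nO.
have [nYZ nYpZ] : Z - Y != 0 /\ Y + Z != 0.
  by move: dYZ; rewrite (_ : _ - _ = (Z - Y) * (Y + Z) / (Y * Z)); [move/nz_split=> [/nz_split]|fld].
have [nZX nZpX] : X - Z != 0 /\ Z + X != 0.
  by move: dZX; rewrite (_ : _ - _ = (X - Z) * (Z + X) / (Z * X)); [move/nz_split=> [/nz_split]|fld].
have [nXY nXpY] : Y - X != 0 /\ X + Y != 0.
  by move: dXY; rewrite (_ : _ - _ = (Y - X) * (X + Y) / (X * Y)); [move/nz_split=> [/nz_split]|fld].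
have nXpZ : X + Z != 0 by rewrite addrC.
have nYpX : Y + X != 0 by rewrite addrC.
have nZpY : Z + Y != 0 by rewrite addrC.
have [ea ead] : a = 2*r*Y*Z/(Y+Z) /\ ad = 2*r/(Y+Z).
 by apply: (uniq2R dYZ tAY tAZ); fld.
have [eb ebd] : b = 2*r*Z*X/(Z+X) /\ bd = 2*r/(Z+X).
  by apply: (uniq2R dZX tBZ tBX); fld.
have [ec ecd] : c = 2*r*X*Y/(X+Y) /\ cd = 2*r/(X+Y).
  by apply: (uniq2R dXY tCX tCY); fld.
subst a ad b bd c cd.
have [eha ehad] : ha = 2*r*X^+2*(Y+Z)/((X+Y)*(X+Z)) /\ had = 2*r*(Y+Z)/((X+Y)*(X+Z)).
  apply: (uniq2R _ oA1 oA2); try fld.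
  rewrite (_ : _ - _ = 4*r^+2*X*(Z-Y)/((X+Y)*(Z+X))); last by fld.
  by rewrite !mulf_neq0 ?invr_eq0 ?mulf_neq0 ?pnatr_eq0 ?expf_neq0 // -opprB oppr_eq0.
have [ehb ehbd] : hb = 2*r*Y^+2*(Z+X)/((Y+Z)*(Y+X)) /\ hbd = 2*r*(Z+X)/((Y+Z)*(Y+X)).
  apply: (uniq2R _ oB1 oB2); try fld.
  rewrite (_ : _ - _ = 4*r^+2*Y*(X-Z)/((Y+Z)*(X+Y))); last by fld.
  by rewrite !mulf_neq0 ?invr_eq0 ?mulf_neq0 ?pnatr_eq0 ?expf_neq0 // -opprB oppr_eq0.
have [ehc ehcd] : hc = 2*r*Z^+2*(X+Y)/((Z+X)*(Z+Y)) /\ hcd = 2*r*(X+Y)/((Z+X)*(Z+Y)).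
  apply: (uniq2R _ oC1 oC2); try fld.
  rewrite (_ : _ - _ = 4*r^+2*Z*(Y-X)/((Z+X)*(Y+Z))); last by fld.
  by rewrite !mulf_neq0 ?invr_eq0 ?mulf_neq0 ?pnatr_eq0 ?expf_neq0 // -opprB oppr_eq0.
subst ha had hb hbd hc hcd.
have [eoa eoad] : oa = 2*r*Y*Z*(Y*Z - X^+2)/((X+Y)*(Y+Z)*(Z+X)) /\ oad = 2*r*(X^+2 - Y*Z)/((X+Y)*(Y+Z)*(Z+X)).
  by apply: (circC nA cA1 cA2); fld.
have [eob eobd] : ob = 2*r*Z*X*(Z*X - Y^+2)/((X+Y)*(Y+Z)*(Z+X)) /\ obd = 2*r*(Y^+2 - Z*X)/((X+Y)*(Y+Z)*(Z+X)).
  by apply: (circC nB cB1 cB2); fld.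
have [eoc eocd] : oc = 2*r*X*Y*(X*Y - Z^+2)/((X+Y)*(Y+Z)*(Z+X)) /\ ocd = 2*r*(Z^+2 - X*Y)/((X+Y)*(Y+Z)*(Z+X)).
  by apply: (circC nC cC1 cC2); fld.
subst oa oad ob obd oc ocd.
have [eo eod] : o = -(2*r*X*Y*Z*(X+Y+Z))/((X+Y)*(Y+Z)*(Z+X)) /\ od = -(2*r*(X*Y+Y*Z+Z*X))/((X+Y)*(Y+Z)*(Z+X)).
  by apply: (circC nO cO1 cO2); fld.
subst o od.
have [ns1 ns2] : X + Y + Z != 0 /\ X*Y + Y*Z + Z*X != 0.
  move: nO; rewrite (_ : _ - _ = (X+Y+Z) * (X*Y+Y*Z+Z*X) * (4*r^+2*(X-Y)*(X-Z)*(Z-Y)/((X+Y)*(Y+Z)*(Z+X))^+2)); last by fld.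
  by move/nz_split=> [/nz_split].
have nZY : Y - Z != 0 by rewrite -opprB oppr_eq0.
have e1 : (2*r*X*Y*(X*Y - Z^+2)/((X+Y)*(Y+Z)*(Z+X)) - 2*r*Z*X*(Z*X - Y^+2)/((X+Y)*(Y+Z)*(Z+X)))
   = 2*r*X*(Y-Z)*(X*Y+Y*Z+Z*X)/((X+Y)*(Y+Z)*(Z+X)) by fld.
have e2 : (2*r*(Z^+2 - X*Y)/((X+Y)*(Y+Z)*(Z+X)) - 2*r*(Y^+2 - Z*X)/((X+Y)*(Y+Z)*(Z+X)))
   = 2*r*(Z-Y)*(X+Y+Z)/((X+Y)*(Y+Z)*(Z+X)) by fld.
rewrite e1 e2; split.
- by rewrite !mulf_neq0 ?invr_eq0 ?mulf_neq0 ?pnatr_eq0 ?expf_neq0.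
- by fld.
- by fld.
Qed.

Lemma subBB (K : zmodType) (x y z : K) : (x - z) - (y - z) = x - y.
Proof. by rewrite opprB addrA subrK. Qed.

Lemma core_abs (K : numFieldType) (tX cX tY cY tZ cZ rr tI cI tA cA tB cB tC cC
   tHA cHA tHB cHB tHC cHC tOA cOA tOB cOB tOC cOC tO cO : K) :
  2 = tX*cX + cX*tX -> 2 = tY*cY + cY*tY -> 2 = tZ*cZ + cZ*tZ -> rr != 0 ->
  rr*2 = (tB - tI)*cX + (cB - cI)*tX -> rr*2 = (tC - tI)*cX + (cC - cI)*tX ->
  rr*2 = (tC - tI)*cY + (cC - cI)*tY -> rr*2 = (tA - tI)*cY + (cA - cI)*tY ->
  rr*2 = (tA - tI)*cZ + (cA - cI)*tZ -> rr*2 = (tB - tI)*cZ + (cB - cI)*tZ ->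
  cY*tZ - tY*cZ != 0 -> cZ*tX - tZ*cX != 0 -> cX*tY - tX*cY != 0 ->
  0 = (tHA - tB)*(cI - cC) + (cHA - cB)*(tI - tC) ->
  0 = (tHA - tI)*(cC - cB) + (cHA - cI)*(tC - tB) ->
  0 = (tHB - tC)*(cI - cA) + (cHB - cC)*(tI - tA) ->
  0 = (tHB - tI)*(cA - cC) + (cHB - cI)*(tA - tC) ->
  0 = (tHC - tA)*(cI - cB) + (cHC - cA)*(tI - tB) ->
  0 = (tHC - tI)*(cB - cA) + (cHC - cI)*(tB - tA) ->
  (tOA - tA)*(cOA - cA) = (tOA - tHB)*(cOA - cHB) ->
  (tOA - tA)*(cOA - cA) = (tOA - tHC)*(cOA - cHC) ->
  (cHB - cA)*(tHC - tA) - (tHB - tA)*(cHC - cA) != 0 ->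
  (tOB - tB)*(cOB - cB) = (tOB - tHC)*(cOB - cHC) ->
  (tOB - tB)*(cOB - cB) = (tOB - tHA)*(cOB - cHA) ->
  (cHC - cB)*(tHA - tB) - (tHC - tB)*(cHA - cB) != 0 ->
  (tOC - tC)*(cOC - cC) = (tOC - tHA)*(cOC - cHA) ->
  (tOC - tC)*(cOC - cC) = (tOC - tHB)*(cOC - cHB) ->
  (cHA - cC)*(tHB - tC) - (tHA - tC)*(cHB - cC) != 0 ->
  (tO - tOA)*(cO - cOA) = (tO - tOB)*(cO - cOB) ->
  (tO - tOA)*(cO - cOA) = (tO - tOC)*(cO - cOC) ->
  (cOB - cOA)*(tOC - tOA) - (tOB - tOA)*(cOC - cOA) != 0 ->
  [/\ tHA - tI != 0,
   (cI - cHA)*((tOB + (tOC - tOB)/(cOC - cOB)*(cO - cOB)) - tHA)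
     - (tI - tHA)*((cOB + (cOC - cOB)/(tOC - tOB)*(tO - tOB)) - cHA) = 0 &
   (cI - cHA)*((tOB + (tOC - tOB)/(cOC - cOB)*((cOA+cOB+cOC)/3 - cOB)) - tHA)
     - (tI - tHA)*((cOB + (cOC - cOB)/(tOC - tOB)*((tOA+tOB+tOC)/3 - tOB)) - cHA) = 0].
Proof.
have two0 : (2 : K) != 0 by rewrite pnatr_eq0.
have unit2 : forall x xd : K, 2 = x*xd + xd*x -> x * xd = 1.
  by move=> x xd h; apply: (mulIf two0); rewrite mul1r [RHS]h; ring.
move=> /unit2 uX /unit2 uY /unit2 uZ nr.
move=> t1 t2 t3 t4 t5 t6 d1 d2 d3 o1 o2 o3 o4 o5 o6 c1 c2 n1 c3 c4 n2 c5 c6 n3 c7 c8 n4.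
have := @core K tX tY tZ cX cY cZ rr (tA - tI) (cA - cI) (tB - tI) (cB - cI) (tC - tI) (cC - cI)
  (tHA - tI) (cHA - cI) (tHB - tI) (cHB - cI) (tHC - tI) (cHC - cI)
  (tOA - tI) (cOA - cI) (tOB - tI) (cOB - cI) (tOC - tI) (cOC - cI) (tO - tI) (cO - cI)
  uX uY uZ nr.
rewrite !subBB.
have e : forall x y : K, rr * 2 = x -> x = 2 * rr by move=> x y <-; rewrite mulrC.
move/(_ (e _ tB t1) (e _ tB t2) (e _ tB t3) (e _ tB t4) (e _ tB t5) (e _ tB t6)).
move/(_ ltac:(by rewrite [cZ * _]mulrC) ltac:(by rewrite [cX * _]mulrC) ltac:(by rewrite [cY * _]mulrC)).
move/(_ ltac:(by apply: (useH (esym o1)); ring) ltac:(by apply: (useH (esym o2)); ring)).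
move/(_ ltac:(by apply: (useH (esym o3)); ring) ltac:(by apply: (useH (esym o4)); ring)).
move/(_ ltac:(by apply: (useH (esym o5)); ring) ltac:(by apply: (useH (esym o6)); ring)).
move/(_ c1 c2 ltac:(by rewrite [(cHC - cA) * _]mulrC)).
move/(_ c3 c4 ltac:(by rewrite [(cHA - cB) * _]mulrC)).
move/(_ c5 c6 ltac:(by rewrite [(cHB - cC) * _]mulrC)).
move/(_ c7 c8 ltac:(by rewrite [(cOC - cOA) * _]mulrC)).
move=> [nHA g1 g2]; split => //.
- by apply: (useH g1); ring.
- apply: (useH g2).
  rewrite (_ : (tOA - tI + (tOB - tI) + (tOC - tI)) / 3 - (tOB - tI) = (tOA + tOB + tOC) / 3 - tOB); last by field.
  rewrite (_ : (cOA - cI + (cOB - cI) + (cOC - cI)) / 3 - (cOB - cI) = (cOA + cOB + cOC) / 3 - cOB); last by field.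
  ring.
Qed.
Arguments core_abs {K tX cX tY cY tZ cZ rr tI cI tA cA tB cB tC cC tHA cHA tHB cHB tHC cHC tOA cOA tOB cOB tOC cOC tO cO}.

Section Real.
Variable R : rcfType.
Local Notation pt := (point R).

Lemma pt_neq (p q : pt) : p <> q -> p.1 != q.1 \/ p.2 != q.2.
Proof.
case: p q => [a b] [c d] /= h.
case: (eqVneq a c) => [e1|]; last by left.
case: (eqVneq b d) => [e2|]; last by right.
by case: h; rewrite e1 e2.
Qed.

Lemma refl_invol (P Q Z : pt) : sqdist Q P != 0 -> reflect_pt P Q (reflect_pt P Q Z) = Z.
Proof.
case: P Q Z => [a b] [c d] [e f]; rewrite /reflect_pt /sqdist /dot /psub /padd /pscale /= => nz.
congr pair; field; exact: nz.
Qed.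

Lemma refl_cross (P Q a b c : pt) : sqdist Q P != 0 ->
  cross (psub (reflect_pt P Q b) (reflect_pt P Q a)) (psub (reflect_pt P Q c) (reflect_pt P Q a))
  = - cross (psub b a) (psub c a).
Proof.
case: P Q a b c => [p1 p2] [q1 q2] [a1 a2] [b1 b2] [c1 c2].
rewrite /reflect_pt /cross /sqdist /dot /psub /padd /pscale /= => nz.
field; exact: nz.
Qed.

Lemma coll3 (p q a b c : pt) : p <> q ->
  cross (psub q p) (psub a p) = 0 -> cross (psub q p) (psub b p) = 0 ->
  cross (psub q p) (psub c p) = 0 -> cross (psub b a) (psub c a) = 0.
Proof.
move=> /pt_neq hpq.
case: p q a b c hpq => [p1 p2] [q1 q2] [a1 a2] [b1 b2] [c1 c2].
rewrite /cross /psub /= => hpq ha hb hc.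
set d1 := q1 - p1; set d2 := q2 - p2.
have E1 : d1 * ((b1 - a1) * (c2 - a2) - (b2 - a2) * (c1 - a1)) =
   (b1 - p1) * ((q1 - p1) * (c2 - p2) - (q2 - p2) * (c1 - p1)) - (c1 - p1) * ((q1 - p1) * (b2 - p2) - (q2 - p2) * (b1 - p1))
 - ((a1 - p1) * ((q1 - p1) * (c2 - p2) - (q2 - p2) * (c1 - p1)) - (c1 - p1) * ((q1 - p1) * (a2 - p2) - (q2 - p2) * (a1 - p1)))
 - ((b1 - p1) * ((q1 - p1) * (a2 - p2) - (q2 - p2) * (a1 - p1)) - (a1 - p1) * ((q1 - p1) * (b2 - p2) - (q2 - p2) * (b1 - p1)))
  by rewrite /d1 /d2; ring.
have E2 : d2 * ((b1 - a1) * (c2 - a2) - (b2 - a2) * (c1 - a1)) =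
   (b2 - p2) * ((q1 - p1) * (c2 - p2) - (q2 - p2) * (c1 - p1)) - (c2 - p2) * ((q1 - p1) * (b2 - p2) - (q2 - p2) * (b1 - p1))
 - ((a2 - p2) * ((q1 - p1) * (c2 - p2) - (q2 - p2) * (c1 - p1)) - (c2 - p2) * ((q1 - p1) * (a2 - p2) - (q2 - p2) * (a1 - p1)))
 - ((b2 - p2) * ((q1 - p1) * (a2 - p2) - (q2 - p2) * (a1 - p1)) - (a2 - p2) * ((q1 - p1) * (b2 - p2) - (q2 - p2) * (b1 - p1)))
  by rewrite /d1 /d2; ring.
rewrite ha hb hc !mulr0 !subrr in E1 E2.
case: hpq => h.
- by move/eqP: E1; rewrite mulf_eq0 subr_eq0 eq_sym (negbTE h) => /eqP.
- by move/eqP: E2; rewrite mulf_eq0 subr_eq0 eq_sym (negbTE h) => /eqP.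
Qed.


Arguments coll3 {p q a b c}.

Lemma cross_self (X Y : pt) : cross (psub Y X) (psub Y X) = 0.
Proof. by rewrite /cross /psub /=; ring. Qed.

Lemma cross_0 (X Y : pt) : cross (psub Y X) (psub X X) = 0.
Proof. by rewrite /cross /psub /=; ring. Qed.

Lemma refl_line (P Q U V X Y : pt) : sqdist Q P != 0 -> U <> V -> X <> Y ->
  collinear X Y (reflect_pt P Q U) -> collinear X Y (reflect_pt P Q V) ->
  forall Z, reflect_set P Q (line U V) Z <-> line X Y Z.
Proof.
move=> nz UV XY hU hV Z.
have nr : reflect_pt P Q U <> reflect_pt P Q V.
  by move=> e; apply: UV; rewrite -(refl_invol _ _ U nz) -(refl_invol _ _ V nz) e.
have hX := coll3 XY hU hV (cross_0 X Y).
have hY := coll3 XY hU hV (cross_self X Y).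
split.
- case=> W hW ->.
  have hW' : cross (psub (reflect_pt P Q V) (reflect_pt P Q U))
                   (psub (reflect_pt P Q W) (reflect_pt P Q U)) = 0.
    by rewrite refl_cross // hW oppr0.
  exact: (coll3 nr hX hY hW').
- move=> hZ; exists (reflect_pt P Q Z); last by rewrite refl_invol.
  have hc := coll3 XY hU hV hZ.
  have := @refl_cross P Q (reflect_pt P Q U) (reflect_pt P Q V) Z nz.
  by rewrite !refl_invol // hc oppr0.
Qed.


Lemma sqdist_ge0 (p q : pt) : 0 <= sqdist p q.
Proof. by rewrite /sqdist /dot addr_ge0 // -expr2 sqr_ge0. Qed.

Lemma sqdist_eq0 (p q : pt) : sqdist p q = 0 -> p = q.
Proof.
case: p q => [a b] [c d]; rewrite /sqdist /dot /psub /= => /eqP.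
rewrite paddr_eq0 -?expr2 ?sqr_ge0 // !sqrf_eq0 !subr_eq0 => /andP[/eqP -> /eqP ->].
by [].
Qed.

Lemma dist_facts (p q : pt) : p <> q -> 0 < dist p q /\ dist p q ^+ 2 = sqdist p q.
Proof.
move=> pq; have h0 := sqdist_ge0 p q.
have hn : sqdist p q != 0 by apply/eqP => /sqdist_eq0.
split; last by rewrite /dist sqr_sqrtr.
by rewrite /dist sqrtr_gt0 lt_def hn h0.
Qed.

Definition rot (p : pt) : pt := (p.2, - p.1).

Lemma ncol_neq (A B C : pt) : ~ collinear A B C -> [/\ A <> B, B <> C & C <> A].
Proof.
move=> h; split => e; apply: h; rewrite /collinear ?e /cross /psub /=; ring.
Qed.

Lemma incenter_facts (A B C : pt) : ~ collinear A B C ->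
  exists (r : R) (n1 n2 n3 : pt),
   [/\ r != 0, dot n1 n1 = 1, dot n2 n2 = 1 & dot n3 n3 = 1] /\
   [/\ dot (psub B (incenter A B C)) n1 = r, dot (psub C (incenter A B C)) n1 = r,
       dot (psub C (incenter A B C)) n2 = r, dot (psub A (incenter A B C)) n2 = r &
       dot (psub A (incenter A B C)) n3 = r] /\
   [/\ dot (psub B (incenter A B C)) n3 = r,
       cross n2 n3 != 0, cross n3 n1 != 0 & cross n1 n2 != 0].
Proof.
move=> nc; have [AB BC CA] := ncol_neq _ _ _ nc.
have [ha sa] := dist_facts _ _ BC.
have [hb sb] := dist_facts _ _ CA.
have [hc sc] := dist_facts _ _ AB.
rewrite /incenter.
move: (dist B C) (dist C A) (dist A B) ha hb hc sa sb sc => a b c ha hb hc sa sb sc.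
have na : a != 0 by rewrite gt_eqF.
have nb : b != 0 by rewrite gt_eqF.
have nc' : c != 0 by rewrite gt_eqF.
have ns : a + b + c != 0 by rewrite gt_eqF // !addr_gt0.
move: nc; rewrite /collinear => nD.
have {}nD : cross (psub B A) (psub C A) != 0 by apply/eqP.
exists (cross (psub B A) (psub C A) / (a + b + c)).
exists (pscale a^-1 (rot (psub C B))), (pscale b^-1 (rot (psub A C))), (pscale c^-1 (rot (psub B A))).
move: sa sb sc nD; case: A B C {AB BC CA} => [a1 a2] [b1 b2] [c1 c2].
rewrite /sqdist /dot /cross /psub /pscale /padd /rot /= => sa sb sc nD.
split; [split|split; [split|split]].
- by rewrite mulf_neq0 ?invr_eq0.
- by rewrite -[1](divff (expf_neq0 2 na)) [X in _ = X / _]sa; field.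
- by rewrite -[1](divff (expf_neq0 2 nb)) [X in _ = X / _]sb; field.
- by rewrite -[1](divff (expf_neq0 2 nc')) [X in _ = X / _]sc; field.
all: try (field; rewrite ?na ?nb ?nc' ?ns //).
- rewrite (_ : _ - _ = ((b1 - a1) * (c2 - a2) - (b2 - a2) * (c1 - a1)) / (b * c)); last by field; rewrite ?na ?nb ?nc' ?ns.
  by rewrite mulf_neq0 ?invr_eq0 ?mulf_neq0.
- rewrite (_ : _ - _ = ((b1 - a1) * (c2 - a2) - (b2 - a2) * (c1 - a1)) / (c * a)); last by field; rewrite ?na ?nb ?nc' ?ns.
  by rewrite mulf_neq0 ?invr_eq0 ?mulf_neq0.
- rewrite (_ : _ - _ = ((b1 - a1) * (c2 - a2) - (b2 - a2) * (c1 - a1)) / (a * b)); last by field; rewrite ?na ?nb ?nc' ?ns.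
  by rewrite mulf_neq0 ?invr_eq0 ?mulf_neq0.
Qed.

End Real.

Section ComplexPart.
Local Open Scope complex_scope.

Section Bridge.
Variable R : rcfType.
Local Notation K := (R[i]).
Local Notation pt := (point R).
Local Notation cj := (@conjc R).

Definition toC (p : pt) : K := (p.1 +i* p.2)%C.

Lemma cjD (x y : K) : cj (x + y) = cj x + cj y. Proof. exact: rmorphD. Qed.
Lemma cjB (x y : K) : cj (x - y) = cj x - cj y. Proof. exact: rmorphB. Qed.
Lemma cjM (x y : K) : cj (x * y) = cj x * cj y. Proof. exact: rmorphM. Qed.
Lemma cjV (x : K) : cj (x^-1) = (cj x)^-1. Proof. exact: conjc_inv. Qed.
Lemma cjK (x : K) : cj (cj x) = x. Proof. exact: conjcK. Qed.

Lemma toC_inj (p q : pt) : toC p = toC q -> p = q.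
Proof. by case: p q => [a b] [c d] [-> ->]. Qed.

Lemma toCB (p q : pt) : toC (psub p q) = toC p - toC q.
Proof. by case: p q => [a b] [c d]; rewrite /toC /psub /=; simpc. Qed.

Lemma dotC (p q : pt) : (dot p q)%:C * 2 = toC p * (cj (toC q)) + (cj (toC p)) * toC q.
Proof.
case: p q => [a b] [c d]; rewrite /toC /dot /=; simpc.
apply/eqP; rewrite eq_complex /=; apply/andP; split; apply/eqP; ring.
Qed.

Lemma crossC (p q : pt) : (cross p q)%:C * 2 * 'i = (cj (toC p)) * toC q - toC p * (cj (toC q)).
Proof.
case: p q => [a b] [c d]; rewrite /toC /cross /=; simpc.
apply/eqP; rewrite eq_complex /=; apply/andP; split; apply/eqP; ring.
Qed.

Lemma sqdistC (p q : pt) : (sqdist p q)%:C = (toC p - toC q) * (cj (toC p - toC q)).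
Proof.
case: p q => [a b] [c d]; rewrite /toC /sqdist /dot /psub /=; simpc.
apply/eqP; rewrite eq_complex /=; apply/andP; split; apply/eqP; ring.
Qed.


Lemma reflC (P Q X : pt) : sqdist Q P != 0 ->
  toC (reflect_pt P Q X) = toC P + (toC Q - toC P) / (cj (toC Q - toC P)) * (cj (toC X - toC P)).
Proof.
move=> nz.
have nu : (cj (toC Q - toC P)) != 0.
  apply: contra nz => /eqP h; apply/eqP; apply: complexI.
  by rewrite sqdistC h mulr0.
have E : (toC (reflect_pt P Q X) - toC P) * (cj (toC Q - toC P)) = (toC Q - toC P) * (cj (toC X - toC P)).
  move: nz; clear nu; case: P Q X => [a b] [c d] [e f]; rewrite /toC /reflect_pt /sqdist /dot /psub /padd /pscale /= => nz.
  simpc; apply/eqP; rewrite eq_complex /=; apply/andP; split; apply/eqP; field; exact: nz.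
by rewrite mulrAC -E mulfK // addrC subrK.
Qed.

Lemma centroidC0 (A B C : pt) : toC (centroid A B C) = (3^-1 : R)%:C * (toC A + toC B + toC C).
Proof.
case: A B C => [a b] [c d] [e f]; rewrite /toC /centroid /padd /pscale /= -complexr0; simpc.
apply/eqP; rewrite eq_complex /=; apply/andP; split; apply/eqP; ring.
Qed.

Lemma centroidC (A B C : pt) : toC (centroid A B C) = (toC A + toC B + toC C) / 3.
Proof. by rewrite centroidC0 mulrC fmorphV rmorph_nat. Qed.


Definition rel (I P : pt) : K := toC P - toC I.
Definition reld (I P : pt) : K := cj (toC P) - cj (toC I).

Lemma two_neq0 : (2 : K) != 0. Proof. by rewrite pnatr_eq0. Qed.

Lemma T_dot (I P n : pt) (r : R) : dot (psub P I) n = r ->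
  rel I P * cj (toC n) + reld I P * toC n = 2 * r%:C.
Proof.
move=> H; have := dotC (psub P I) n; rewrite H toCB rmorphB /rel /reld => <-.
by rewrite mulrC.
Qed.

Lemma twoi_neq0 : (2 * 'i : K) != 0.
Proof.
rewrite mulf_neq0 ?two_neq0 //.
by rewrite eq_complex /= negb_and oner_eq0 orbT.
Qed.

Lemma T_nd (m n : pt) : cross m n != 0 -> cj (toC m) * toC n - toC m * cj (toC n) != 0.
Proof.
apply: contra => /eqP H; have := crossC m n; rewrite H -mulrA => /eqP.
rewrite mulf_eq0 (negbTE twoi_neq0) orbF => /eqP /(f_equal (@complex.Re R)) /= ->.
by [].
Qed.

Lemma reflCc (P Q U : pt) : sqdist Q P != 0 ->
  cj (toC (reflect_pt P Q U)) = cj (toC P) + (cj (toC Q) - cj (toC P)) / (toC Q - toC P) * (toC U - toC P).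
Proof. by move=> nz; rewrite reflC // cjD !cjM cjV !cjK !cjB. Qed.

Lemma T_final (H I P Q U : pt) : sqdist Q P != 0 ->
  (cj (toC I) - cj (toC H)) * ((toC P + (toC Q - toC P) / (cj (toC Q) - cj (toC P)) * (cj (toC U) - cj (toC P))) - toC H)
  - (toC I - toC H) * ((cj (toC P) + (cj (toC Q) - cj (toC P)) / (toC Q - toC P) * (toC U - toC P)) - cj (toC H)) = 0 ->
  collinear H I (reflect_pt P Q U).
Proof.
move=> nz E; rewrite /collinear.
have E2 := crossC (psub I H) (psub (reflect_pt P Q U) H).
rewrite (toCB I H) (toCB (reflect_pt P Q U) H) [cj (toC I - _)]cjB in E2.
rewrite [cj (toC (reflect_pt P Q U) - _)]cjB reflCc // reflC // !cjB E -mulrA in E2.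
move/eqP: E2; rewrite mulf_eq0 (negbTE twoi_neq0) orbF => /eqP /(f_equal (@complex.Re R)) /= ->.
by [].
Qed.

End Bridge.

Lemma cj3 (R : rcfType) (a b c : R[i]) : conjc ((a + b + c) / 3) = (conjc a + conjc b + conjc c) / 3.
Proof. by rewrite cjM cjV rmorph_nat !cjD. Qed.

Lemma caseA (R : rcfType) (A B C HA HB HC OA OB OC O : point R) :
  ~ collinear A B C ->
  is_orthocenter HA B (incenter A B C) C ->
  is_orthocenter HB C (incenter A B C) A ->
  is_orthocenter HC A (incenter A B C) B ->
  ~ collinear A HB HC -> ~ collinear B HC HA -> ~ collinear C HA HB ->
  is_circumcenter OA A HB HC ->
  is_circumcenter OB B HC HA ->
  is_circumcenter OC C HA HB ->
  ~ collinear OA OB OC ->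
  is_circumcenter O OA OB OC ->
  O <> centroid OA OB OC ->
  forall X, reflect_set OB OC (line O (centroid OA OB OC)) X <-> line HA (incenter A B C) X.
Proof.
move=> nABC [hA1 hA2 _] [hB1 hB2 _] [hC1 hC2 _] nA nB nC [cA1 cA2] [cB1 cB2] [cC1 cC2] nO [cO1 cO2] OG.
have [r [n1 [n2 [n3 [[nr u1 u2 u3] [[t1 t2 t3 t4 t5] [t6 d1 d2 d3]]]]]]] := incenter_facts _ _ _ _ nABC.
set I := incenter A B C in hA1 hA2 hB1 hB2 hC1 hC2 t1 t2 t3 t4 t5 t6 *.
Local Notation cj := (@conjc _).
have U1 := dotC _ n1 n1; rewrite u1 rmorph1 mul1r in U1.
have U2 := dotC _ n2 n2; rewrite u2 rmorph1 mul1r in U2.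
have U3 := dotC _ n3 n3; rewrite u3 rmorph1 mul1r in U3.
have T1 := dotC _ (psub B I) n1; rewrite t1 toCB cjB in T1.
have T2 := dotC _ (psub C I) n1; rewrite t2 toCB cjB in T2.
have T3 := dotC _ (psub C I) n2; rewrite t3 toCB cjB in T3.
have T4 := dotC _ (psub A I) n2; rewrite t4 toCB cjB in T4.
have T5 := dotC _ (psub A I) n3; rewrite t5 toCB cjB in T5.
have T6 := dotC _ (psub B I) n3; rewrite t6 toCB cjB in T6.
have D1 := T_nd _ _ _ d1. have D2 := T_nd _ _ _ d2. have D3 := T_nd _ _ _ d3.
have nr' : r%:C != 0 by apply: contra nr => /eqP /complexI ->.
have ncol : forall P Q S : point R, ~ collinear P Q S -> cross (psub Q P) (psub S P) != 0.
  by move=> P Q S h; apply/eqP.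
have O1 := dotC _ (psub HA B) (psub I C); rewrite hA1 rmorph0 mul0r !toCB !cjB in O1.
have O2 := dotC _ (psub HA I) (psub C B); rewrite hA2 rmorph0 mul0r !toCB !cjB in O2.
have O3 := dotC _ (psub HB C) (psub I A); rewrite hB1 rmorph0 mul0r !toCB !cjB in O3.
have O4 := dotC _ (psub HB I) (psub A C); rewrite hB2 rmorph0 mul0r !toCB !cjB in O4.
have O5 := dotC _ (psub HC A) (psub I B); rewrite hC1 rmorph0 mul0r !toCB !cjB in O5.
have O6 := dotC _ (psub HC I) (psub B A); rewrite hC2 rmorph0 mul0r !toCB !cjB in O6.
have C1 := congr1 (real_complex R) cA1; rewrite !sqdistC !cjB in C1.
have C2 := congr1 (real_complex R) cA2; rewrite !sqdistC !cjB in C2.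
have C3 := congr1 (real_complex R) cB1; rewrite !sqdistC !cjB in C3.
have C4 := congr1 (real_complex R) cB2; rewrite !sqdistC !cjB in C4.
have C5 := congr1 (real_complex R) cC1; rewrite !sqdistC !cjB in C5.
have C6 := congr1 (real_complex R) cC2; rewrite !sqdistC !cjB in C6.
have C7 := congr1 (real_complex R) cO1; rewrite !sqdistC !cjB in C7.
have C8 := congr1 (real_complex R) cO2; rewrite !sqdistC !cjB in C8.
have N1 := T_nd _ _ _ (ncol _ _ _ nA); rewrite !toCB !cjB in N1.
have N2 := T_nd _ _ _ (ncol _ _ _ nB); rewrite !toCB !cjB in N2.
have N3 := T_nd _ _ _ (ncol _ _ _ nC); rewrite !toCB !cjB in N3.
have N4 := T_nd _ _ _ (ncol _ _ _ nO); rewrite !toCB !cjB in N4.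
have [nHA G1 G2] := core_abs U1 U2 U3 nr' T1 T2 T3 T4 T5 T6 D1 D2 D3 O1 O2 O3 O4 O5 O6
   C1 C2 N1 C3 C4 N2 C5 C6 N3 C7 C8 N4.
have nz : sqdist OC OB != 0.
  apply/eqP => /sqdist_eq0 e; apply: nO; rewrite /collinear e /cross /psub /=; ring.
have HI : HA <> I by move=> e; move: nHA; rewrite e subrr eqxx.
apply: (refl_line _ _ _ _ _ _ _ nz OG HI).
- exact: T_final _ _ _ _ _ _ nz G1.
- apply: T_final _ _ _ _ _ _ nz _.
  rewrite centroidC cj3.
  exact: G2.
Qed.


Lemma incenter_cyc (R : rcfType) (A B C : point R) : incenter B C A = incenter A B C.
Proof.
rewrite /incenter.
have -> : dist C A + dist A B + dist B C = dist B C + dist C A + dist A B by ring.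
by rewrite /pscale /padd /=; congr pair; ring.
Qed.

Lemma centroid_cyc (R : rcfType) (A B C : point R) : centroid B C A = centroid A B C.
Proof. by rewrite /centroid /pscale /padd /=; congr pair; ring. Qed.

Lemma circ_cyc (R : rcfType) (O A B C : point R) : is_circumcenter O A B C -> is_circumcenter O B C A.
Proof. by move=> [e1 e2]; split; rewrite -?e1 -?e2. Qed.

Lemma ncol_cyc (R : rcfType) (A B C : point R) : ~ collinear A B C -> ~ collinear B C A.
Proof.
move=> h e; apply: h; move: e; rewrite /collinear /cross /psub /= => e.
by rewrite -e; ring.
Qed.

End ComplexPart.

Theorem proposition5p7 (R : rcfType) (A B C HA HB HC OA OB OC O : point R) :
  ~ collinear A B C ->
  is_orthocenter HA B (incenter A B C) C ->
  is_orthocenter HB C (incenter A B C) A ->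
  is_orthocenter HC A (incenter A B C) B ->
  ~ collinear A HB HC -> ~ collinear B HC HA -> ~ collinear C HA HB ->
  is_circumcenter OA A HB HC ->
  is_circumcenter OB B HC HA ->
  is_circumcenter OC C HA HB ->
  ~ collinear OA OB OC ->
  is_circumcenter O OA OB OC ->
  O <> centroid OA OB OC ->
  let I := incenter A B C in
  let euler := line O (centroid OA OB OC) in
  [/\ forall X, reflect_set OB OC euler X <-> line HA I X,
      forall X, reflect_set OC OA euler X <-> line HB I X &
      forall X, reflect_set OA OB euler X <-> line HC I X].
Proof.
move=> nABC hA hB hC nA nB nC cA cB cC nO cO OG I euler.
have i1 : incenter B C A = incenter A B C := incenter_cyc _ _ _ _.
have i2 : incenter C A B = incenter A B C by rewrite -incenter_cyc -incenter_cyc.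
have g1 : centroid OB OC OA = centroid OA OB OC := centroid_cyc _ _ _ _.
have g2 : centroid OC OA OB = centroid OA OB OC by rewrite -centroid_cyc -centroid_cyc.
split.
- exact: caseA nABC hA hB hC nA nB nC cA cB cC nO cO OG.
- have := @caseA _ B C A HB HC HA OB OC OA O (ncol_cyc _ _ _ _ nABC) ltac:(by rewrite i1) ltac:(by rewrite i1) ltac:(by rewrite i1)
    nB nC nA cB cC cA (ncol_cyc _ _ _ _ nO) (circ_cyc _ _ _ _ _ cO) ltac:(by rewrite g1).
  by rewrite i1 g1.
- have := @caseA _ C A B HC HA HB OC OA OB O (ncol_cyc _ _ _ _ (ncol_cyc _ _ _ _ nABC)) ltac:(by rewrite i2) ltac:(by rewrite i2) ltac:(by rewrite i2)
    nC nA nB cC cA cB (ncol_cyc _ _ _ _ (ncol_cyc _ _ _ _ nO)) (circ_cyc _ _ _ _ _ (circ_cyc _ _ _ _ _ cO)) ltac:(by rewrite g2).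
  by rewrite i2 g2.
Qed.
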